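(* Let $G=\langle a,b\mid a^n=1,\ b^t=a^k,\ b^{-1}ab=a^r\rangle$ with natural numbers $n,t,k,r$ satisfying $r^t\equiv1\pmod n$ and $k(r-1)\equiv0\pmod n$. Then the subgroups $H_{v,i,c}$, $(v,i,c)\in\mathfrak{N}$, are exactly all the normal subgroups of $G$, and they are pairwise distinct (distinct triples give distinct subgroups).
   Context: For a divisor $v$ of $n$, $o_v$ is the multiplicative order of $r$ modulo $v$. For integers $v,i,c$, $H_{v,i,c}=\langle a^v,a^ib^c\rangle$. $\mathfrak{N}=\{(v,i,c)\in\mathbb{Z}^3: v>0,\ v\mid n,\ c>0,\ c\mid t,\ 0\le i\le v-1,\ v\mid k+i\tfrac tc,\ o_v\mid c,\ v\mid i(r-1)\}$. *)

(* Defs.v *)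
From mathcomp Require Import all_boot all_algebra all_fingroup.
Set Implicit Arguments. Unset Strict Implicit. Unset Printing Implicit Defensive.
Import GRing.Theory.
Local Open Scope group_scope.

(* Multiplicative order of r modulo v (v > 0): least m >= 1 with r^m = 1 mod v.
   (Searched among 1..v, which suffices when r is coprime to v.) *)
Definition mord (v r : nat) : nat :=
  (find (fun m => r ^ m.+1 == 1 %[mod v]) (iota 0 v)).+1.

(* (G, a, b) is the group <a, b | a^n = 1, b^t = a^k, b^-1 a b = a^r>:
   a, b generate G, satisfy the relations, and G has the universal property
   w.r.t. every (finite) group with a pair of elements satisfying them. *)
Definition metacyc_pres (n t k r : nat) (gT : finGroupType) (G : {group gT})
  (a b : gT) : Prop :=
  [/\ <<[set a; b]>>%g = G, (a ^+ n = 1)%g, (b ^+ t = a ^+ k)%g,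
      (a ^ b = a ^+ r)%g &
      forall (rT : finGroupType) (x y : rT),
        (x ^+ n = 1)%g -> (y ^+ t = x ^+ k)%g -> (x ^ y = x ^+ r)%g ->
        exists f : {morphism G >-> rT}, f a = x /\ f b = y].

Definition Hvic (gT : finGroupType) (a b : gT) (v i c : nat) : {group gT} :=
  <<[set a ^+ v; (a ^+ i * b ^+ c)%g]>>%G.

Definition inN (n t k r v i c : nat) : Prop :=
  [/\ [/\ 0 < v, v %| n, 0 < c, c %| t & i < v],
      v %| k + i * (t %/ c),
      mord v r %| c &
      ((v%:Z) %| ((i%:Z * (r%:Z - 1))%R))%Z ].

(* Main.v *)
Require Import Defs.
From mathcomp Require Import all_boot all_algebra all_fingroup all_solvable.
From mathcomp Require Import ring zify.
Set Implicit Arguments. Unset Strict Implicit. Unset Printing Implicit Defensive.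
Module AR.
Import GRing.Theory.

Lemma int_cond v i r n : 0 < n -> v %| n ->
  ((v%:Z) %| ((i%:Z * (r%:Z - 1))%R))%Z = (v %| i * (r + n.-1))%N.
Proof.
move=> n0 vn.
have e : ((i * (r + n.-1))%N%:Z = i%:Z * (r%:Z - 1) + (i * n)%N%:Z)%R.
  case: n n0 vn => // m _ _ /=.
  rewrite !PoszM !PoszD -addn1 PoszD; ring.
have -> : (v %| i * (r + n.-1))%N = ((v%:Z) %| (i * (r + n.-1))%N%:Z)%Z.
  by rewrite dvdzE !absz_nat.
rewrite e rpredDr //.
by rewrite dvdzE absz_nat absz_nat dvdn_mull.
Qed.

Lemma kr_of n t k r : 0 < n -> 0 < t -> (r ^ t = 1 %[mod n])%N ->
  ((n%:Z) %| ((k%:Z * (r%:Z - 1))%R))%Z -> (k * r = k %[mod n])%N.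
Proof.
move=> n0 t0 rt; rewrite (@int_cond n k r n n0 (dvdnn n)) => /eqP h.
have : (k * r + k * n.-1 + k = k * r + k * n)%N.
  by rewrite -addnA -{3}(muln1 k) -mulnDr addn1 prednK.
rewrite -mulnDr => /(congr1 (modn^~ n)).
by rewrite -modnDml h add0n -modnDmr modnMl addn0 => ->.
Qed.

Lemma powmod1 v r t x : r ^ t = 1 %[mod v] -> r ^ (t * x) = 1 %[mod v].
Proof. by move=> rt; rewrite expnM -modnXm rt modnXm exp1n. Qed.

Lemma pigeon v r t : 0 < v -> 0 < t -> r ^ t = 1 %[mod v] ->
  exists m, [/\ 0 < m, m <= v & r ^ m = 1 %[mod v]].
Proof.
move=> v0 t0 rt.
pose g : 'I_v.+1 -> 'I_v := fun i => Ordinal (ltn_pmod (r ^ i) v0).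
have : ~~ injectiveb g.
  apply/negP => /injectiveP inj; have := leq_card g inj.
  by rewrite !card_ord ltnn.
move/injectivePn => [x [y xy e]].
have key : forall x y : 'I_v.+1, x < y -> g x = g y ->
    exists m, [/\ 0 < m, m <= v & r ^ m = 1 %[mod v]].
  clear xy e x y => x y lxy /(congr1 val) /= e.
  exists (y - x); split; first by rewrite subn_gt0.
    by rewrite (leq_trans (leq_subr _ _)) // -ltnS.
  have h1 : r ^ (t * x - x) * r ^ x = 1 %[mod v].
    by rewrite -expnD subnK ?leq_pmull // powmod1.
  have h2 : r ^ (t * x - x) * r ^ x * r ^ (y - x) = r ^ (t * x - x) * r ^ y.
    by rewrite -mulnA -expnD subnKC // ltnW.
  move: h2 => /(congr1 (modn^~ v)).
  rewrite -modnMml h1 modnMml mul1n => ->.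
  by rewrite -modnMmr -e modnMmr.
case: (ltngtP x y) => [lxy|lyx|exy]; first exact: key e.
  exact: key lyx (esym e).
by move: xy; rewrite (val_inj exy) eqxx.
Qed.

Lemma mordP v r t : 0 < v -> 0 < t -> r ^ t = 1 %[mod v] ->
  forall c, (mord v r %| c) = (r ^ c == 1 %[mod v]).
Proof.
move=> v0 t0 rt.
set P := (fun m => r ^ m.+1 == 1 %[mod v]).
have hasP : has P (iota 0 v).
  have [m [m0 mv rm]] := pigeon v0 t0 rt.
  apply/hasP; exists m.-1; first by rewrite mem_iota add0n (leq_trans _ mv) // prednK.
  by rewrite /P prednK // rm.
have -> : mord v r = (find P (iota 0 v)).+1 by [].
set d := find P (iota 0 v).
have dv : d < v by move: hasP; rewrite has_find size_iota.
have Pd : r ^ d.+1 = 1 %[mod v].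
  by have := nth_find 0 hasP; rewrite nth_iota // add0n => /eqP.
have dmin : forall m, 0 < m -> m < d.+1 -> r ^ m != 1 %[mod v].
  move=> m m0 md; have := @before_find _ 0 P (iota 0 v) m.-1.
  rewrite -ltnS prednK // => /(_ md); rewrite nth_iota ?add0n; last first.
    by move: md dv m0; clear; lia.
  by rewrite /P prednK // => ->.
move=> c; apply/idP/idP => [/dvdnP [q ->]|h].
  by rewrite mulnC powmod1.
rewrite /dvdn; apply/negPn/negP => s0.
have : r ^ (c %% d.+1) = 1 %[mod v].
  move: h; rewrite {1}(divn_eq c d.+1) expnD => /eqP.
  by rewrite (mulnC (c %/ d.+1)) -modnMml (powmod1 _ Pd) modnMml mul1n.
move/eqP; apply/negP; apply: dmin; first by rewrite lt0n.
by rewrite ltn_pmod.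
Qed.

End AR.
Import AR.

Local Open Scope nat_scope.

Definition mk (n t : nat) (Hn : 0 < n) (Ht : 0 < t) (j z : nat) : 'I_t * 'I_n :=
  (Ordinal (ltn_pmod j Ht), Ordinal (ltn_pmod z Hn)).

Lemma mkE n t Hn Ht j z j' z' : j = j' %[mod t] -> z = z' %[mod n] ->
  @mk n t Hn Ht j z = mk Hn Ht j' z'.
Proof. by move=> e1 e2; rewrite /mk; congr pair; apply: val_inj => /=. Qed.

Lemma mk_id n t Hn Ht (p : 'I_t * 'I_n) : p = mk Hn Ht p.1 p.2.
Proof.
case: p => [[j hj] [z hz]]; rewrite /mk; congr pair; apply: val_inj => /=;
  by rewrite modn_small.
Qed.

Lemma mk1 n t Hn Ht j z : val (@mk n t Hn Ht j z).1 = j %% t. Proof. by []. Qed.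
Lemma mk2 n t Hn Ht j z : val (@mk n t Hn Ht j z).2 = z %% n. Proof. by []. Qed.

Definition fX n t (Hn : 0 < n) (Ht : 0 < t) (p : 'I_t * 'I_n) := mk Hn Ht p.1 (p.2 + 1).
Definition fY n t (r k : nat) (Hn : 0 < n) (Ht : 0 < t) (p : 'I_t * 'I_n) :=
  mk Hn Ht (p.1 + 1) (p.2 * r + k * ((p.1 + 1) %/ t)).

Lemma peq n t (p q : 'I_t * 'I_n) : val p.1 = val q.1 -> val p.2 = val q.2 -> p = q.
Proof. by case: p q => [? ?] [? ?] /= /val_inj -> /val_inj ->. Qed.

Lemma fX_inj n t Hn Ht : injective (@fX n t Hn Ht).
Proof.
move=> p q /(congr1 (fun p => (val p.1, val p.2))).
rewrite /fX /= => -[]; rewrite !(modn_small (ltn_ord _)) => e1 /eqP.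
rewrite eqn_modDr !(modn_small (ltn_ord _)) => /eqP e.
by apply: peq.
Qed.

Lemma mulr_canc n t r x y : 0 < t -> r ^ t = 1 %[mod n] ->
  x * r = y * r %[mod n] -> x = y %[mod n].
Proof.
move=> Ht rt e.
have : x * r ^ t = y * r ^ t %[mod n].
  by rewrite -(prednK Ht) expnSr !mulnA ![(_ * _ ^ _ * r)%N]mulnAC -modnMml e modnMml.
by rewrite -modnMmr rt modnMmr -[in RHS]modnMmr rt modnMmr !muln1.
Qed.

Lemma fY_inj n t r k Hn Ht : r ^ t = 1 %[mod n] -> injective (@fY n t r k Hn Ht).
Proof.
move=> rt p q /(congr1 (fun p => (val p.1, val p.2))).
rewrite /fY /= => -[] /eqP; rewrite eqn_modDr !(modn_small (ltn_ord _)) => /eqP ej.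
rewrite ej; move/eqP; rewrite eqn_modDr => /eqP e.
have := mulr_canc Ht rt e.
rewrite !(modn_small (ltn_ord _)) => ez.
by apply: peq.
Qed.


Section Dummy. End Dummy.

Lemma PX_mk n t Hn Ht j z :
  (perm (@fX_inj n t Hn Ht)) (mk Hn Ht j z) = mk Hn Ht j (z + 1).
Proof. by rewrite permE /fX; apply: mkE => /=; rewrite ?modn_mod ?modnDml. Qed.

Lemma PXm n t Hn Ht j z m :
  ((perm (@fX_inj n t Hn Ht)) ^+ m)%g (mk Hn Ht j z) = mk Hn Ht j (z + m).
Proof.
rewrite permX; elim: m => [|m IH]; first by rewrite addn0.
by rewrite iterS IH PX_mk addn1 addnS.
Qed.

Lemma PY_mk n t r k Hn Ht (rt : r ^ t = 1 %[mod n]) j z :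
  (perm (@fY_inj n t r k Hn Ht rt)) (mk Hn Ht j z) =
  mk Hn Ht (j + 1) (z * r + k * ((j %% t + 1) %/ t)).
Proof. by rewrite permE /fY; apply: mkE => /=; rewrite ?modnDml // -modnDml modnMml modnDml. Qed.

Lemma PYm n t r k Hn Ht (rt : r ^ t = 1 %[mod n]) (kr : k * r = k %[mod n]) j z m :
  ((perm (@fY_inj n t r k Hn Ht rt)) ^+ m)%g (mk Hn Ht j z) =
  mk Hn Ht (j + m) (z * r ^ m + k * ((j %% t + m) %/ t)).
Proof.
rewrite permX; elim: m => [|m IH].
  rewrite /= addn0 expn0 muln1 divn_small; first by rewrite muln0 addn0.
  by rewrite addn0 ltn_pmod.
rewrite iterS IH PY_mk; apply: mkE; first by rewrite addn1 addnS.
set J := j %% t + m.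
have -> : (j + m) %% t = J %% t by rewrite /J modnDml.
have -> : j %% t + m.+1 = (J %/ t * t) + (J %% t + 1) by rewrite addnA -divn_eq addn1 addnS.
rewrite divnMDl //.
rewrite expnSr mulnA mulnDr mulnDl !addnA -modnDml -[in RHS]modnDml.
congr ((_ + _) %% n); rewrite -modnDmr -[in RHS]modnDmr; congr ((_ + _) %% n).
by rewrite [(k * _ * r)%N]mulnAC -modnMml kr modnMml.
Qed.

Lemma model n t k r : 0 < n -> 0 < t -> r ^ t = 1 %[mod n] -> k * r = k %[mod n] ->
  exists (T : finType) (x y : {perm T}) (pt : T) (pr : T -> nat),
  [/\ (x ^+ n = 1)%g, (y ^+ t = x ^+ k)%g, (x ^ y = x ^+ r)%g,
      (forall m, (x ^+ m)%g pt = pt -> n %| m) &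
      (forall x1 j x2, pr ((x ^+ x2)%g ((y ^+ j)%g ((x ^+ x1)%g pt))) = j %% t)].
Proof.
move=> Hn Ht rt kr.
exists (('I_t * 'I_n)%type : finType).
exists (perm (@fX_inj n t Hn Ht)), (perm (@fY_inj n t r k Hn Ht rt)).
exists (mk Hn Ht 0 0), (fun p => val p.1).
split.
- apply/permP => p; rewrite perm1 (mk_id Hn Ht p) PXm; apply: (mkE Hn Ht) => //.
  by rewrite modnDr.
- apply/permP => p; rewrite (mk_id Hn Ht p) PXm PYm //; apply: (mkE Hn Ht); first by rewrite modnDr.
  rewrite divnDr ?dvdnn // divnn Ht divn_small ?ltn_pmod // add0n muln1.
  by rewrite -modnDml -modnMmr rt modnMmr muln1 modnDml.
- have e : (perm (@fX_inj n t Hn Ht) * perm (@fY_inj n t r k Hn Ht rt) =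
           perm (@fY_inj n t r k Hn Ht rt) * perm (@fX_inj n t Hn Ht) ^+ r)%g.
    apply/permP => p; rewrite (mk_id Hn Ht p) !permM PX_mk !PY_mk PXm.
    apply: (mkE Hn Ht) => //.
    by rewrite mulnDl mul1n addnAC.
  by rewrite conjgE e mulKg.
- move=> m; rewrite PXm => /(congr1 (fun p => val p.2)) /=.
  by rewrite add0n mod0n => /eqP; rewrite -/(dvdn n m).
- by move=> x1 j x2; rewrite !PXm PYm // PXm /= add0n.
Qed.

Local Open Scope group_scope.

Lemma conj_pow (gT : finGroupType) (a b : gT) r : a ^ b = a ^+ r ->
  forall c, a ^ (b ^+ c) = a ^+ (r ^ c)%N.
Proof.
move=> ab; elim=> [|c IH]; first by rewrite expg0 conjg1 expn0 expg1.
by rewrite expgSr conjgM IH conjXg ab -expgM -expnS.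
Qed.

Lemma comm_ab (gT : finGroupType) (a b : gT) r i c : a ^ b = a ^+ r ->
  a ^+ i * b ^+ c = b ^+ c * a ^+ (i * r ^ c)%N.
Proof.
by move=> ab; rewrite conjgC conjXg (conj_pow ab) -expgM mulnC.
Qed.

Lemma norm_gen_lemma (gT : finGroupType) (S : {set gT}) x :
  (forall y, y \in S -> y ^ x \in <<S>>) -> x \in 'N(<<S>>).
Proof.
move=> hS; rewrite inE -genJ gen_subG; apply/subsetP => z.
rewrite mem_conjg => /hS; by rewrite conjgKV.
Qed.

Lemma normal_lemma (gT : finGroupType) (G H : {group gT}) (a b : gT) :
  <<[set a; b]>> = G -> H \subset G -> a \in 'N(H) -> b \in 'N(H) -> H <| G.
Proof.
move=> Hgen sH na nb; apply/andP; split => //; rewrite -Hgen gen_subG.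
by apply/subsetP => x /set2P [] ->.
Qed.

Lemma inG (gT : finGroupType) (G : {group gT}) (a b : gT) :
  <<[set a; b]>> = G -> a \in G /\ b \in G.
Proof. by move=> <-; split; apply: mem_gen; rewrite !inE eqxx ?orbT. Qed.

Lemma cyc_normal (gT : finGroupType) (G : {group gT}) (a b : gT) r v :
  <<[set a; b]>> = G -> a ^ b = a ^+ r -> <[a ^+ v]> <| G.
Proof.
move=> Hgen ab; have [aG bG] := inG Hgen.
apply: (normal_lemma Hgen); first by rewrite cycle_subG groupX.
  apply: norm_gen_lemma => y; rewrite inE => /eqP ->.
  by rewrite conjXg conjgE mulKg mem_gen // inE.
apply: norm_gen_lemma => y; rewrite inE => /eqP ->.
by rewrite conjXg ab -expgM mulnC expgM mem_cycle.
Qed.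

Lemma Gdec (gT : finGroupType) (G : {group gT}) (a b : gT) r :
  <<[set a; b]>> = G -> a ^ b = a ^+ r ->
  forall g, g \in G -> exists j x, g = b ^+ j * a ^+ x.
Proof.
move=> Hgen ab g.
have nA := cyc_normal 1 Hgen ab; rewrite expg1 in nA.
have eG : (G : {set gT}) = <[b]> * <[a]>.
  rewrite -norm_joinEl; first by rewrite joingC -Hgen joing_idl joing_idr.
  by rewrite cycle_subG (subsetP (normal_norm nA)) // (inG Hgen).2.
rewrite eG.
move/mulsgP => [y z /cycleP [j ->] /cycleP [x ->] ->].
by exists j, x.
Qed.

Lemma powK (gT : finGroupType) (K : {group gT}) (x : gT) m :
  0 < m -> x ^+ m \in K ->
  exists d, [/\ 0 < d, d %| m & forall j, (x ^+ j \in K) = (d %| j)].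
Proof.
move=> m0 xm.
have exP : exists j, (0 < j) && (x ^+ j \in K) by exists m; rewrite m0.
case: (ex_minnP exP) => d /andP [d0 xd] dmin.
have key : forall j, (x ^+ j \in K) = (d %| j).
  move=> j; apply/idP/idP => [xj|/dvdnP [q ->]]; last by rewrite mulnC expgM groupX.
  have : x ^+ (j %% d) \in K.
    by move: xj; rewrite {1}(divn_eq j d) expgD groupMl // mulnC expgM groupX.
  case: (posnP (j %% d)) => [/eqP|pos xr]; first by rewrite /dvdn.
  by have := dmin _ (introT andP (conj pos xr)); rewrite leqNgt ltn_pmod.
by exists d; split => //; rewrite -key.
Qed.

Local Open Scope group_scope.

Lemma struct_facts n t k r (gT : finGroupType) (G : {group gT}) (a b : gT) :
  0 < n -> 0 < t -> (r ^ t = 1 %[mod n])%N -> (k * r = k %[mod n])%N ->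
  metacyc_pres n t k r G a b ->
  #[a] = n /\ (forall j j' g g', g \in <[a]> -> g' \in <[a]> ->
                 b ^+ j * g = b ^+ j' * g' -> (j = j' %[mod t])%N).
Proof.
move=> Hn Ht rt kr [Hgen an bt ab univ].
have [T [x [y [pt [pr [xn yt xy xord prj]]]]]] := model Hn Ht rt kr.
have [f [fa fb]] := univ _ x y xn yt xy.
have [aG bG] := inG Hgen.
split.
  apply/eqP; rewrite eqn_dvd order_dvdn an eqxx /=.
  apply: xord; have : f (a ^+ #[a]) = 1 by rewrite expg_order morph1.
  by rewrite morphX // fa => ->; rewrite perm1.
have key : forall j z, pr ((f (b ^+ j * a ^+ z)) pt) = (j %% t)%N.
  move=> j z; rewrite morphM ?groupX // !morphX // fa fb permM.
  by have := prj 0%N j z; rewrite expg0 perm1.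
move=> j j' g g' /cycleP [z1 ->] /cycleP [z2 ->] /(congr1 (fun h => pr (f h pt))).
by rewrite !key.
Qed.

Local Open Scope group_scope.

Record hyp n t k r (gT : finGroupType) (G : {group gT}) (a b : gT) : Prop := Hyp {
  h_n : (0 < n)%N; h_t : (0 < t)%N; h_gen : <<[set a; b]>> = G;
  h_an : a ^+ n = 1; h_bt : b ^+ t = a ^+ k; h_ab : a ^ b = a ^+ r;
  h_ord : #[a] = n; h_rt : (r ^ t = 1 %[mod n])%N; h_kr : (k * r = k %[mod n])%N;
  h_proj : forall j j' g g', g \in <[a]> -> g' \in <[a]> ->
     b ^+ j * g = b ^+ j' * g' -> (j = j' %[mod t])%N }.

Section S. End S.

Lemma expA n t k r gT (G : {group gT}) a b (h : hyp n t k r G a b) v x :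
  (v %| n)%N -> (a ^+ x \in <[a ^+ v]>) = (v %| x)%N.
Proof.
move=> vn; apply/idP/idP => [/cycleP [y] /eqP|/dvdnP [q ->]].
  rewrite -expgM eq_expg_mod_order (h_ord h) => /eqP e.
  rewrite /dvdn -(modn_dvdm x vn) e modn_dvdm //.
  by rewrite -/(dvdn v (v * y)) dvdn_mulr.
by rewrite mulnC expgM mem_cycle.
Qed.

Lemma invA n t k r gT (G : {group gT}) a b (h : hyp n t k r G a b) x :
  (a ^+ x)^-1 = a ^+ (x * n.-1).
Proof. by rewrite -expVgn invg_expg (h_ord h) -expgM mulnC. Qed.

Lemma wpow n t k r gT (G : {group gT}) a b (h : hyp n t k r G a b) v i c :
  (r ^ c = 1 %[mod v])%N ->
  forall m, exists S, a ^+ i * b ^+ c = b ^+ c * a ^+ (i * r ^ c) /\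
    (a ^+ i * b ^+ c) ^+ m = b ^+ (c * m) * a ^+ S /\ (S = m * i %[mod v])%N.
Proof.
move=> rc; have ab := h_ab h; have wE := comm_ab i c ab.
elim=> [|m [S [_ [eS mS]]]].
  by exists 0%N; rewrite !expg0 muln0 expg0 mulg1 mod0n.
exists (S * r ^ c + i * r ^ c)%N; split => //; split.
  rewrite expgSr eS wE mulgA -(mulgA (b ^+ (c * m))) (comm_ab S c ab).
  by rewrite mulgA -expgD -mulnSr -mulgA -expgD.
rewrite -modnDm -modnMmr rc modnMmr muln1 -[((i * r ^ c) %% v)%N]modnMmr rc modnMmr.
by rewrite muln1 modnDm -modnDml mS modnDml mulSn addnC.
Qed.

Lemma rc_of n t k r gT (G : {group gT}) a b (h : hyp n t k r G a b) v i c :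
  inN n t k r v i c -> (r ^ c = 1 %[mod v])%N.
Proof.
move=> [[v0 vn c0 ct iv] vk mc vi].
have rtv : (r ^ t = 1 %[mod v])%N by rewrite -(modn_dvdm _ vn) (h_rt h) modn_dvdm.
by apply/eqP; rewrite -(mordP v0 (h_t h) rtv).
Qed.

Lemma H_prod n t k r gT (G : {group gT}) a b (h : hyp n t k r G a b) v i c :
  (Hvic a b v i c : {set gT}) = <[a ^+ v]> * <[a ^+ i * b ^+ c]>.
Proof.
have [aG bG] := inG (h_gen h).
rewrite -norm_joinEr; first by rewrite /Hvic /= joing_idl joing_idr.
rewrite cycle_subG (subsetP (normal_norm (cyc_normal v (h_gen h) (h_ab h)))) //.
by rewrite groupM ?groupX.
Qed.

Lemma memH n t k r gT (G : {group gT}) a b (h : hyp n t k r G a b) v i c x :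
  (r ^ c = 1 %[mod v])%N -> x \in Hvic a b v i c ->
  exists z m S, x = a ^+ (v * z) * (b ^+ (c * m) * a ^+ S) /\ (S = m * i %[mod v])%N.
Proof.
move=> rc; rewrite (H_prod h) => /mulsgP [y w /cycleP [z ->] /cycleP [m ->] ->].
have [S [_ [eS mS]]] := wpow h i rc m.
by exists z, m, S; rewrite -expgM eS.
Qed.

Lemma capA n t k r gT (G : {group gT}) a b (h : hyp n t k r G a b) v i c x :
  inN n t k r v i c -> x \in Hvic a b v i c -> x \in <[a]> -> x \in <[a ^+ v]>.
Proof.
move=> hN; have rc := rc_of h hN.
move: hN => [[v0 vn c0 ct iv] vk mc vi] xH xA.
have [z [m [S [ex mS]]]] := memH h rc xH.
have ab := h_ab h.
rewrite ex mulgA (comm_ab _ _ ab) -mulgA in xA *.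
have tcm : (t %| c * m)%N.
  have gA : a ^+ (v * z * r ^ (c * m)) * a ^+ S \in <[a]> by rewrite groupM ?mem_cycle.
  have e := h_proj h (j := (c * m)%N) (j' := 0%N) gA xA (esym (mul1g _)).
  by move: e; rewrite mod0n /dvdn => ->.
have [q eq] : exists q, (c * m = t * q)%N by exists (c * m %/ t)%N; rewrite [RHS]mulnC divnK.
have em : m = (t %/ c * q)%N.
  apply/eqP; rewrite -(eqn_pmul2l c0) eq mulnA [(c * _)%N]mulnC divnK //.
rewrite eq expgM (h_bt h) -!expgM -!expgD (expA h) //.
rewrite addnCA dvdn_addr; last by rewrite -mulnA dvdn_mulr.
rewrite /dvdn -modnDmr mS modnDmr em.
have -> : (k * q + t %/ c * q * i = q * (k + i * (t %/ c)))%N.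
  lia.
by rewrite -/(dvdn v _) dvdn_mull.
Qed.

Lemma dirC n t k r gT (G : {group gT}) a b (h : hyp n t k r G a b) v i c i' c' :
  inN n t k r v i c -> a ^+ i' * b ^+ c' \in Hvic a b v i c -> (c %| c')%N.
Proof.
move=> hN; have rc := rc_of h hN.
move: hN => [[v0 vn c0 ct iv] vk mc vi] xH.
have [z [m [S [ex mS]]]] := memH h rc xH.
have ab := h_ab h.
move: ex; rewrite mulgA !(comm_ab _ _ ab) -mulgA => ex.
have gA : a ^+ (v * z * r ^ (c * m)) * a ^+ S \in <[a]> by rewrite groupM ?mem_cycle.
have e := h_proj h (mem_cycle _ _) gA ex.
by rewrite /dvdn -(modn_dvdm c' ct) e modn_dvdm // -/(dvdn c _) dvdn_mulr.
Qed.

Lemma conjgg' (gT : finGroupType) (x : gT) : x ^ x = x.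
Proof. by rewrite conjgE mulKg. Qed.

Lemma av_in (gT : finGroupType) (a b : gT) v i c : <[a ^+ v]> \subset Hvic a b v i c.
Proof. by rewrite cycle_subG mem_gen // !inE eqxx. Qed.

Lemma w_in (gT : finGroupType) (a b : gT) v i c : a ^+ i * b ^+ c \in Hvic a b v i c.
Proof. by rewrite mem_gen // !inE eqxx orbT. Qed.

Lemma part1 n t k r gT (G : {group gT}) a b (h : hyp n t k r G a b) v i c :
  inN n t k r v i c -> Hvic a b v i c <| G.
Proof.
move=> hN; have rc := rc_of h hN.
move: hN => [[v0 vn c0 ct iv] vk mc vi].
have [aG bG] := inG (h_gen h).
have n0 := h_n h; have ab := h_ab h.
have inH : forall x, (v %| x)%N -> a ^+ x \in Hvic a b v i c.
  by move=> x vx; apply: (subsetP (av_in a b v i c)); rewrite (expA h).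
apply: (normal_lemma (h_gen h)).
- by rewrite gen_subG; apply/subsetP => x /set2P [] ->; rewrite ?groupM ?groupX.
- apply: norm_gen_lemma => y /set2P [] ->.
    by rewrite conjXg conjgg' mem_gen // !inE eqxx.
  have wa : (a ^+ i * b ^+ c) ^ a = (a ^+ i * b ^+ c) * a ^+ (n.-1 * r ^ c + 1).
    have ai : a^-1 = a ^+ n.-1 by rewrite -(expg1 a) (invA h) mul1n expg1.
    rewrite conjgE ai !mulgA -expgD !(comm_ab _ _ ab) -!mulgA -expgSr -expgD.
    congr (_ * a ^+ _); rewrite -(prednK n0) /=; lia.
  rewrite wa groupM ?w_in // inH //.
  rewrite /dvdn -modnDml -modnMmr rc modnMmr muln1 modnDml addn1 prednK //.
- apply: norm_gen_lemma => y /set2P [] ->.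
    by rewrite conjXg ab -expgM mulnC expgM groupX // mem_gen // !inE eqxx.
  have wb : (a ^+ i * b ^+ c) ^ b = a ^+ (i * (r + n.-1)) * (a ^+ i * b ^+ c).
    rewrite conjMg conjXg ab conjXg conjgg' mulgA -expgD -expgM.
    congr (_ * _); apply/eqP; rewrite eq_expg_mod_order (h_ord h).
    have -> : (i * (r + n.-1) + i = r * i + i * n)%N.
      by rewrite -(prednK n0) /=; lia.
    by rewrite -modnDmr modnMl addn0.
  rewrite wb groupM ?w_in // inH //.
  by rewrite -(@int_cond v i r n n0 vn).
Qed.

Lemma part3 n t k r gT (G : {group gT}) a b (h : hyp n t k r G a b) v i c v' i' c' :
  inN n t k r v i c -> inN n t k r v' i' c' ->
  Hvic a b v i c = Hvic a b v' i' c' -> (v, i, c) = (v', i', c').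
Proof.
move=> hN hN' E.
have n0 := h_n h.
have vdiv : forall v i c v' i' c', inN n t k r v i c -> inN n t k r v' i' c' ->
    Hvic a b v i c = Hvic a b v' i' c' -> (v %| v')%N.
  move=> v1 i1 c1 v2 i2 c2 h1 h2 E12.
  have : a ^+ v2 \in <[a ^+ v1]>.
    apply: (capA h h1); last exact: mem_cycle.
    by rewrite E12 (subsetP (av_in a b v2 i2 c2)) // cycle_id.
  by rewrite (expA h) //; case: h1 => -[].
have ev : v = v' by apply/eqP; rewrite eqn_dvd (vdiv _ _ _ _ _ _ hN hN' E) (vdiv _ _ _ _ _ _ hN' hN (esym E)).
have ec : c = c'.
  apply/eqP; rewrite eqn_dvd (dirC h hN (i' := i')) ?E ?w_in //.
  by rewrite (dirC h hN' (i' := i)) -?E ?w_in.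
subst v' c'.
have := hN; move=> [[v0 vn c0 ct iv] vk mc vi].
have := hN'; move=> [[_ _ _ _ iv'] _ _ _].
have : (a ^+ i' * b ^+ c) * (a ^+ i * b ^+ c)^-1 \in <[a ^+ v]>.
  apply: (capA h hN).
    by rewrite groupM ?groupV ?w_in // E w_in.
  by rewrite invMg mulgA mulgK groupM ?groupV ?mem_cycle.
rewrite invMg mulgA mulgK (invA h) -expgD (expA h) // => hd.
have : (i' + i * n = i %[mod v])%N.
  have -> : (i' + i * n = (i' + i * n.-1) + i)%N by rewrite -(prednK n0) /=; lia.
  by rewrite -modnDml (eqP hd) add0n.
rewrite -modnDmr (eqP (dvdn_mull i vn)) addn0 !modn_small // => ->.
done.
Qed.

Lemma part2 n t k r gT (G : {group gT}) a b (h : hyp n t k r G a b) (H : {group gT}) :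
  H <| G -> exists v i c, inN n t k r v i c /\ H = Hvic a b v i c.
Proof.
move=> nH.
have [aG bG] := inG (h_gen h).
have n0 := h_n h; have t0 := h_t h; have ab := h_ab h.
have [sHG nHG] := andP nH.
have nA : <[a]> <| G by have := cyc_normal 1 (h_gen h) ab; rewrite expg1.
have ai : a^-1 = a ^+ n.-1 by rewrite -(expg1 a) (invA h) mul1n expg1.
have anH : a ^+ n \in H by rewrite (h_an h) group1.
have [v [v0 vn vP]] := powK n0 anH.
pose HA := (H <*> <[a]>)%G.
have HAe : (HA : {set gT}) = H * <[a]>.
  by rewrite /HA /= norm_joinEr // (subset_trans (normal_sub nA) nHG).
have bt_in : b ^+ t \in HA.
  by rewrite (h_bt h) (subsetP (joing_subr H <[a]>)) // mem_cycle.
have [c [c0 ct cP]] := powK (K := HA) t0 bt_in.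
have : b ^+ c \in H * <[a]> by rewrite -HAe cP dvdnn.
case/mulsgP => h0 g hH gA eb.
have [y ey] : exists y, h0 = a ^+ y * b ^+ c.
  have -> : h0 = b ^+ c * g^-1 by rewrite eb mulgK.
  rewrite conjgCV.
  have : g^-1 ^ (b ^+ c)^-1 \in <[a]>.
    by rewrite memJ_norm ?groupV // (subsetP (normal_norm nA)) // groupX.
  by case/cycleP => y ->; exists y.
set i := (y %% v)%N.
set w := a ^+ i * b ^+ c.
have wH : w \in H.
  have -> : w = (a ^+ (y %/ v * v))^-1 * h0.
    by rewrite ey {2}(divn_eq y v) expgD -mulgA mulKg.
  by rewrite groupM ?groupV // vP dvdn_mull.
have rtv : (r ^ t = 1 %[mod v])%N by rewrite -(modn_dvdm _ vn) (h_rt h) modn_dvdm.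
have rc : (r ^ c = 1 %[mod v])%N.
  have aw : a ^ w = a ^+ (r ^ c).
    have aai : a ^ (a ^+ i) = a by rewrite conjgE -expgS expgSr mulKg.
    by rewrite /w conjgM aai (conj_pow ab).
  have : a ^+ (r ^ c) * a^-1 \in H.
    have -> : a ^+ (r ^ c) * a^-1 = w^-1 * (w ^ a^-1).
      by rewrite -aw !conjgE invgK !mulgA.
    by rewrite groupM ?groupV // memJ_norm // (subsetP nHG) // groupV.
  rewrite ai -expgD vP /dvdn => /eqP hd.
  have : ((r ^ c + n.-1) + 1 = 1 %[mod v])%N by rewrite -modnDml hd.
  by rewrite -addnA addn1 prednK // -modnDmr (eqP vn) addn0.
have mc : (mord v r %| c)%N by rewrite (mordP v0 t0 rtv) rc.
have vi : (v %| i * (r + n.-1))%N.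
  have : w ^ b \in H by rewrite memJ_norm // (subsetP nHG).
  rewrite /w conjMg conjXg ab conjXg conjgg' -expgM => wbH.
  have : a ^+ (r * i) * (a ^+ i)^-1 \in H.
    have -> : a ^+ (r * i) * (a ^+ i)^-1 = (a ^+ (r * i) * b ^+ c) * w^-1.
      by rewrite /w invMg mulgA mulgK.
    by rewrite groupM ?groupV.
  rewrite (invA h) -expgD vP.
  by rewrite mulnDr mulnC.
have [S [_ [eS mS]]] := wpow h i rc (t %/ c).
have vk : (v %| k + i * (t %/ c))%N.
  have : w ^+ (t %/ c) \in H by rewrite groupX.
  rewrite /w eS mulnC divnK // (h_bt h) -expgD vP.
  by rewrite /dvdn -modnDmr mS modnDmr mulnC.
have iv : (i < v)%N by rewrite ltn_pmod.
have hN : inN n t k r v i c.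
  by rewrite /inN (@int_cond v i r n n0 vn); split => //; split.
exists v, i, c; split => //.
apply/val_inj/eqP; rewrite /= eqEsubset; apply/andP; split; last first.
  rewrite gen_subG; apply/subsetP => x /set2P [] ->; last exact: wH.
  by rewrite vP dvdnn.
apply/subsetP => x xH.
have [j [z ex]] := Gdec (h_gen h) ab (subsetP sHG _ xH).
have : b ^+ j \in HA.
  by rewrite HAe -(mulgK (a ^+ z) (b ^+ j)) -ex mem_mulg ?groupV ?mem_cycle.
rewrite cP => /dvdnP [m ej].
have [S' [_ [eS' mS']]] := wpow h i rc m.
have gA' : (w ^+ m)^-1 * x \in <[a]>.
  by rewrite /w eS' ex ej mulnC invMg -mulgA mulKg groupM ?groupV ?mem_cycle.
have gH : (w ^+ m)^-1 * x \in H by rewrite groupM ?groupV ?groupX.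
have gHv : (w ^+ m)^-1 * x \in Hvic a b v i c.
  move: gA' gH => /cycleP [u ->]; rewrite vP => vu.
  by rewrite (subsetP (av_in a b v i c)) // (expA h).
by rewrite -(mulKVg (w ^+ m) x) groupM ?groupX ?w_in.
Qed.

Local Open Scope group_scope.

Theorem lemma1 (n t k r : nat) (gT : finGroupType) (G : {group gT}) (a b : gT) :
  0 < n -> 0 < t ->
  (r ^ t = 1 %[mod n])%N ->
  ((n%:Z) %| ((k%:Z * (r%:Z - 1))%R))%Z ->
  metacyc_pres n t k r G a b ->
  [/\ (forall v i c, inN n t k r v i c -> Hvic a b v i c <| G),
      (forall H : {group gT}, H <| G ->
         exists v i c, inN n t k r v i c /\ H = Hvic a b v i c) &
      (forall v i c v' i' c', inN n t k r v i c -> inN n t k r v' i' c' ->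
         Hvic a b v i c = Hvic a b v' i' c' -> (v, i, c) = (v', i', c'))].
Proof.
move=> Hn Ht rt hk Hp.
have kr := kr_of Hn Ht rt hk.
have [ord proj] := struct_facts Hn Ht rt kr Hp.
case: Hp => gen an bt ab univ.
have h : hyp n t k r G a b := Hyp Hn Ht gen an bt ab ord rt kr proj.
split; [exact: part1 h | exact: part2 h | exact: part3 h].
Qed.
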